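(* Let $d=p\geq 2$ be a prime number and let $\varGamma$ be a lattice in $\mathbb{R}^p$. Then the factor group $\operatorname{SOS}(\varGamma)/\operatorname{SOC}(\varGamma)$ is an elementary Abelian $p$-group, i.e., it is the direct sum of cyclic groups of order $p$.
   Context: A lattice in $\mathbb{R}^d$ is a subgroup of the form $\mathbb{Z}b_1\oplus\cdots\oplus\mathbb{Z}b_d$ where $\{b_1,\dots,b_d\}$ is a basis of $\mathbb{R}^d$. Two lattices $\varGamma,\varGamma'$ are commensurate, written $\varGamma\sim\varGamma'$, if $\varGamma\cap\varGamma'$ has finite index both in $\varGamma$ and in $\varGamma'$. $\operatorname{SOC}(\varGamma)=\{R\in\operatorname{SO}(d):\varGamma\sim R\varGamma\}$ and $\operatorname{SOS}(\varGamma)=\{R\in\operatorname{SO}(d):\varGamma\sim\alpha R\varGamma\text{ for some }\alpha>0\}$; these are groups and $\operatorname{SOC}(\varGamma)$ is a normal subgroup of $\operatorname{SOS}(\varGamma)$. Here the direct sum is allowed to be trivial (empty). *)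

(* Defs.v *)
From HB Require Import structures.
From mathcomp Require Import all_boot all_order all_algebra.
From mathcomp Require Import reals.
Set Implicit Arguments. Unset Strict Implicit. Unset Printing Implicit Defensive.
Import Order.TTheory GRing.Theory Num.Theory.
Local Open Scope ring_scope.

Section Defs.
Variables (R : realType) (d : nat).

Definition vset := 'cV[R]_d -> Prop.

Definition lattice_span (B : 'M[R]_d) : vset :=
  fun x => exists z : 'cV[R]_d, (forall i, z i 0 \is a Num.int) /\ x = B *m z.

Definition is_lattice (L : vset) : Prop :=
  exists B : 'M[R]_d, B \in unitmx /\ forall x, L x <-> lattice_span B x.

Definition setI_v (A C : vset) : vset := fun x => A x /\ C x.

(* H (a subgroup of G) has finite index in G: finitely many cosets x + H cover G *)
Definition finite_index (H G : vset) : Prop :=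
  exists s : seq 'cV[R]_d, forall x, G x -> exists2 y, y \in s & H (x - y).

Definition commensurate (L L' : vset) : Prop :=
  finite_index (setI_v L L') L /\ finite_index (setI_v L L') L'.

Definition image_v (M : 'M[R]_d) (L : vset) : vset :=
  fun y => exists2 x, L x & y = M *m x.

Definition is_SO (M : 'M[R]_d) : Prop := M^T *m M = 1%:M /\ \det M = 1.

Definition SOC (L : vset) : 'M[R]_d -> Prop :=
  fun M => is_SO M /\ commensurate L (image_v M L).

Definition SOS (L : vset) : 'M[R]_d -> Prop :=
  fun M => is_SO M /\ exists2 a : R, 0 < a & commensurate L (image_v (a *: M) L).

Definition mxpow (M : 'M[R]_d) (n : nat) : 'M[R]_d := iter n (mulmx M) 1%:M.

End Defs.

(* Main.v *)
Require Import Defs.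
From HB Require Import structures.
From mathcomp Require Import all_boot all_order all_algebra.
From mathcomp Require Import reals.
From mathcomp Require Import zify ring.
From Stdlib Require Import ClassicalEpsilon.
Set Implicit Arguments. Unset Strict Implicit. Unset Printing Implicit Defensive.
Import Order.TTheory GRing.Theory Num.Theory.
Local Open Scope ring_scope.

Lemma common_mult (T : finType) (P : nat -> T -> Prop) :
  (forall a b t, P a t -> P (a * b)%N t) ->
  (forall t, exists2 a, (0 < a)%N & P a t) ->
  exists2 N, (0 < N)%N & forall t, P N t.
Proof.
move=> mono h.
suff [N N0 HN] : exists2 N, (0 < N)%N & forall t, t \in enum T -> P N t.
  by exists N => // t; apply: HN; rewrite mem_enum.
elim: (enum T) => [|a s [N N0 HN]]; first by exists 1%N.
have [m m0 hm] := h a; exists (m * N)%N; first by rewrite muln_gt0 m0.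
move=> t; rewrite inE => /orP [/eqP -> | ts]; first exact: mono.
by rewrite mulnC; apply: mono; apply: HN.
Qed.

Section Aux.
Variables (R : realType) (n : nat).
Implicit Types (B M X A : 'M[R]_n) (x y : 'cV[R]_n).

Definition isQ A := exists Q : 'M[rat]_n, A = map_mx (@ratr R) Q.


Definition eqv (A C : vset R n) := forall x, A x <-> C x.

Lemma fi_eqv (H H' G G' : vset R n) : eqv H H' -> eqv G G' ->
  finite_index H G -> finite_index H' G'.
Proof.
move=> eH eG [s hs]; exists s => x /eG /hs [y ys hy]; exists y => //; exact/eH.
Qed.

Lemma setI_eqv (A A' C C' : vset R n) : eqv A A' -> eqv C C' ->
  eqv (setI_v A C) (setI_v A' C').
Proof. by move=> eA eC x; rewrite /setI_v eA eC. Qed.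

Lemma setI_swap (A C : vset R n) : eqv (setI_v A C) (setI_v C A).
Proof. by move=> x; rewrite /setI_v; tauto. Qed.

Lemma comm_eqv (A A' C C' : vset R n) : eqv A A' -> eqv C C' ->
  commensurate A C -> commensurate A' C'.
Proof.
move=> eA eC [h1 h2]; split.
  exact: fi_eqv (setI_eqv eA eC) eA h1.
exact: fi_eqv (setI_eqv eA eC) eC h2.
Qed.

Lemma image_span X B : eqv (image_v X (lattice_span B)) (lattice_span (X *m B)).
Proof.
move=> y; split.
  by case=> x [z [hz ->]] ->; exists z; split => //; rewrite mulmxA.
case=> z [hz ->]; exists (B *m z); first by exists z.
by rewrite mulmxA.
Qed.

Lemma span_sub B x y : lattice_span B x -> lattice_span B y ->
  lattice_span B (x - y).
Proof.
case=> z1 [h1 ->] [z2 [h2 ->]]; exists (z1 - z2); split; last by rewrite mulmxBr.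
by move=> i; rewrite !mxE; apply: rpredB.
Qed.

Lemma span_scale B x (k : nat) : lattice_span B x -> lattice_span B (k%:R *: x).
Proof.
case=> z [h ->]; exists (k%:R *: z); split; last by rewrite scalemxAr.
by move=> i; rewrite !mxE; apply: rpredM => //; apply: rpred_nat.
Qed.

Lemma span_int B x : lattice_span B x <->
  exists z : 'cV[int]_n, x = B *m map_mx intr z.
Proof.
split.
  case=> z [h ->]; exists (map_mx (@Num.floor R) z); congr (_ *m _).
  apply/matrixP => i j; rewrite !mxE; rewrite (ord1 j).
  by have := h i; rewrite intrEfloor => /eqP.
case=> z ->; exists (map_mx intr z); split => // i; rewrite mxE; exact: intr_int.
Qed.

Lemma D1pt B B' x : finite_index (setI_v (lattice_span B) (lattice_span B'))
    (lattice_span B') -> lattice_span B' x ->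
  exists2 k : nat, (0 < k)%N & lattice_span B (k%:R *: x).
Proof.
move=> [s hs] hx.
have H m : exists y, y \in s /\ setI_v (lattice_span B) (lattice_span B') (m%:R *: x - y).
  have [|y ys hy] := hs (m%:R *: x); last by exists y.
  case: hx => z [hz ->]; exists (m%:R *: z); split; last by rewrite scalemxAr.
  by move=> i; rewrite !mxE; apply: rpredM => //; apply: rpred_nat.
pose f m := proj1_sig (constructive_indefinite_description _ (H m)).
have fP m : f m \in s /\ setI_v (lattice_span B) (lattice_span B') (m%:R *: x - f m).
  exact: (proj2_sig (constructive_indefinite_description _ (H m))).
have : ~~ uniq (map f (iota 0 (size s).+1)).
  apply/negP => u.
  have sub : {subset map f (iota 0 (size s).+1) <= s}.
    by move=> y /mapP [m _ ->]; case: (fP m).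
  by have := uniq_leq_size u sub; rewrite size_map size_iota ltnn.
case/(uniqPn 0) => i [j [ij]]; rewrite size_map size_iota => js.
rewrite !(nth_map 0) ?size_iota //; last exact: ltn_trans ij js.
rewrite !nth_iota ?add0n //; last exact: ltn_trans ij js.
move=> fij; exists (j - i)%N; first by rewrite subn_gt0.
have [_ [hi _]] := fP i; have [_ [hj _]] := fP j.
have := span_sub hj hi; rewrite fij.
have -> : j%:R *: x - f j - (i%:R *: x - f j) = (j - i)%N%:R *: x.
  by rewrite natrB ?(ltnW ij) // scalerBl opprB addrA subrK.
done.
Qed.

Lemma isQ_entry A : (forall i j, exists q : rat, A i j = ratr q) -> isQ A.
Proof.
move=> h.
have h' i j : exists q : rat, A i j == ratr q by have [q ->] := h i j; exists q.
exists (\matrix_(i, j) xchoose (h' i j)); apply/matrixP => i j; rewrite !mxE.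
exact/eqP/(xchooseP (h' i j)).
Qed.

Lemma D1 B B' : B \in unitmx ->
  (forall j, exists2 k : nat, (0 < k)%N & lattice_span B (k%:R *: col j B')) ->
  isQ (invmx B *m B').
Proof.
move=> uB h; apply: isQ_entry => i j.
have [k k0 [z [hz e]]] := h j.
have : invmx B *m (k%:R *: col j B') = z by rewrite e mulmxA mulVmx // mul1mx.
rewrite -scalemxAr colE mulmxA -colE => /matrixP /(_ i 0); rewrite !mxE => e2.
have := hz i; rewrite intrEfloor => /eqP ez.
exists ((Num.floor (z i 0))%:~R / k%:R).
rewrite fmorph_div rmorph_int rmorph_nat ez -e2 mulrC mulrA mulVf ?mul1r //.
by rewrite pnatr_eq0 -lt0n.
Qed.

Lemma isQ_denom A : isQ A ->
  exists2 N, (0 < N)%N & forall i j, N%:R * A i j \is a Num.int.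
Proof.
case=> Q ->.
pose P := fun N (t : 'I_n * 'I_n) =>
   N%:R * (map_mx (@ratr R) Q) t.1 t.2 \is a Num.int.
have mono : forall a b t, P a t -> P (a * b)%N t.
  move=> a b t h; rewrite /P natrM mulrAC; apply: rpredM => //; exact: rpred_nat.
have hb : forall t, exists2 a, (0 < a)%N & P a t.
  case=> i j /=; exists (absz (denq (Q i j))).
    by rewrite absz_gt0 denq_neq0.
  rewrite /P mxE /= natr_absz ger0_norm ?denq_ge0 //.
  rewrite -(rmorph_int (@ratr R)) -rmorphM mulrC -numqE rmorph_int.
  exact: intr_int.
have [N N0 HN] := common_mult mono hb.
by exists N => // i j; apply: (HN (i, j)).
Qed.

Lemma FI B (N : nat) (H : vset R n) : (0 < N)%N ->
  (forall x, lattice_span B x -> H (N%:R *: x)) -> finite_index H (lattice_span B).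
Proof.
move=> N0 hH.
exists (map (fun f : {ffun 'I_n -> 'I_N} =>
   B *m map_mx intr (\col_i ((f i : nat)%:Z))) (enum {ffun 'I_n -> 'I_N})).
move=> x /span_int [z ->].
have lt i : (absz (modz (z i ord0) N) < N)%N.
  have h1 := @ltz_pmod (z i ord0) N; have h2 := @modz_ge0 (z i ord0) N.
  have : (0 < N%:Z)%R by rewrite ltz_nat.
  move: (modz (z i ord0) N) h1 h2 => k; lia.
pose f := [ffun i => Ordinal (lt i)].
exists (B *m map_mx intr (\col_i ((f i : nat)%:Z))).
  by apply: map_f; rewrite mem_enum.
have -> : B *m map_mx intr z - B *m map_mx intr (\col_i ((f i : nat)%:Z)) =
   N%:R *: (B *m map_mx intr (\col_i (divz (z i ord0) N))).
  rewrite -mulmxBr scalemxAr; congr (B *m _); apply/matrixP => i j.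
  rewrite !mxE (ord1 j) ffunE /=.
  have Nz : (N%:Z != 0) by rewrite eqz_nat -lt0n.
  rewrite abszE ger0_norm ?modz_ge0 //.
  change ((z i ord0)%:~R - (modz (z i ord0) N)%:~R = N%:R * (divz (z i ord0) N)%:~R :> R).
  rewrite -intrB {1}(divz_eq (z i ord0) N) addrK intrM mulrC; congr (_ * _).
apply: hH; apply/span_int; eexists; reflexivity.
Qed.

Lemma D2 B B' : B' \in unitmx -> isQ (invmx B' *m B) ->
  finite_index (setI_v (lattice_span B) (lattice_span B')) (lattice_span B).
Proof.
move=> uB' /isQ_denom [N N0 hN]; apply: (FI N0) => x hx; split.
  exact: span_scale.
case: hx => z [hz ->].
exists ((N%:R *: (invmx B' *m B)) *m z); split.
  move=> i; rewrite mxE; apply: rpred_sum => k _; rewrite [X in X * _]mxE.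
  exact: rpredM.
by rewrite -scalemxAl -scalemxAr !mulmxA mulmxV // mul1mx.
Qed.

Lemma isQ_mul A C : isQ A -> isQ C -> isQ (A *m C).
Proof. by case=> P -> [Q ->]; exists (P *m Q); rewrite map_mxM. Qed.
Lemma isQ_inv A : isQ A -> isQ (invmx A).
Proof. by case=> P ->; exists (invmx P); rewrite map_invmx. Qed.
Lemma isQ_scale (c : rat) A : isQ A -> isQ (ratr c *: A).
Proof. by case=> P ->; exists (c *: P); rewrite map_mxZ. Qed.


Lemma eqv_sym (A C : vset R n) : eqv A C -> eqv C A.
Proof. by move=> h x; split => /h. Qed.
Lemma eqv_trans (A C D : vset R n) : eqv A C -> eqv C D -> eqv A D.
Proof. by move=> h1 h2 x; rewrite h1 h2. Qed.
Lemma image_eqv X (A C : vset R n) : eqv A C -> eqv (image_v X A) (image_v X C).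
Proof. by move=> h y; split => [] [x /h hx ->]; exists x. Qed.

Lemma invmx_mul A C : A \in unitmx -> C \in unitmx ->
  invmx (A *m C) = invmx C *m invmx A.
Proof.
move=> uA uC; have u : A *m C \in unitmx by rewrite unitmx_mul uA uC.
have e : A *m C *m (invmx C *m invmx A) = 1%:M.
  by rewrite mulmxA -(mulmxA A) mulmxV // mulmx1 mulmxV.
by rewrite -[LHS]mulmx1 -e mulmxA mulVmx // mul1mx.
Qed.

Lemma Q_to_comm B B' : B \in unitmx -> B' \in unitmx -> isQ (invmx B *m B') ->
  commensurate (lattice_span B) (lattice_span B').
Proof.
move=> uB uB' hQ; split.
  apply: D2 => //.
  have -> : invmx B' *m B = invmx (invmx B *m B').
    by rewrite invmx_mul ?unitmx_inv // invmxK.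
  exact: isQ_inv.
apply: fi_eqv (setI_swap _ _) (fun x => iff_refl _) _.
exact: D2.
Qed.

Lemma comm_to_Q B B' : B \in unitmx ->
  commensurate (lattice_span B) (lattice_span B') -> isQ (invmx B *m B').
Proof.
move=> uB [_ h2]; apply: D1 => // j; apply: D1pt h2 _.
rewrite colE; exists (delta_mx j 0); split => // i; rewrite mxE; exact: rpred_nat.
Qed.

Lemma SO_unit M : is_SO M -> M \in unitmx.
Proof. by case=> _ d; rewrite unitmxE d unitr1. Qed.
Lemma SO_inv M : is_SO M -> invmx M = M^T.
Proof.
move=> h; have u := SO_unit h; case: h => h _.
by rewrite -[M^T]mulmx1 -(mulmxV u) mulmxA h mul1mx.
Qed.
Lemma SO_mulT M : is_SO M -> M *m M^T = 1%:M.
Proof. by move=> h; rewrite -SO_inv // mulmxV // SO_unit. Qed.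
Lemma SO_mul M N : is_SO M -> is_SO N -> is_SO (M *m N).
Proof.
move=> hM hN; split; last by rewrite det_mulmx hM.2 hN.2 mulr1.
by rewrite trmx_mul mulmxA -(mulmxA _ _ M) hM.1 mulmx1 hN.1.
Qed.
Lemma SO_tr M : is_SO M -> is_SO M^T.
Proof. by move=> h; split; [rewrite trmxK SO_mulT | rewrite det_tr h.2]. Qed.
Lemma SO_1 : is_SO (1%:M : 'M[R]_n).
Proof. by split; rewrite ?trmx1 ?mulmx1 ?det1. Qed.
Lemma SO_pow M k : is_SO M -> is_SO (mxpow M k).
Proof. by move=> h; elim: k => [|k IH]; [exact: SO_1 | exact: SO_mul]. Qed.

Definition phi B X := invmx B *m (X *m B).

Lemma phiM B X Y : B \in unitmx -> phi B (X *m Y) = phi B X *m phi B Y.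
Proof.
move=> u; rewrite /phi !mulmxA -(mulmxA (invmx B *m X) B (invmx B)) mulmxV //.
by rewrite mulmx1.
Qed.
Lemma phiV B X : B \in unitmx -> X \in unitmx -> phi B (invmx X) = invmx (phi B X).
Proof.
move=> u uX; rewrite /phi invmx_mul ?unitmx_inv ?unitmx_mul ?uX //.
by rewrite invmx_mul // invmxK mulmxA.
Qed.
Lemma phiZ B (a : R) X : phi B (a *: X) = a *: phi B X.
Proof. by rewrite /phi -scalemxAl -scalemxAr. Qed.
Lemma phi1 B : B \in unitmx -> phi B 1%:M = 1%:M.
Proof. by move=> u; rewrite /phi mul1mx mulVmx. Qed.
Lemma phi_pow B X k : B \in unitmx -> phi B (mxpow X k) = mxpow (phi B X) k.
Proof.
move=> u; elim: k => [|k IH]; first exact: phi1.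
by rewrite /= phiM // IH.
Qed.
Lemma pow_scale (c : R) X k : mxpow (c *: X) k = c ^+ k *: mxpow X k.
Proof.
elim: k => [|k IH]; first by rewrite expr0 scale1r.
by rewrite /= IH -scalemxAl -scalemxAr scalerA exprS.
Qed.
Lemma pow_map (Q : 'M[rat]_n) k :
  mxpow (map_mx (@ratr R) Q) k = map_mx (@ratr R) (iter k (mulmx Q) 1%:M).
Proof.
elim: k => [|k IH]; first by rewrite /= map_mx1.
by rewrite /= IH map_mxM.
Qed.
Lemma det_phi B X : B \in unitmx -> \det (phi B X) = \det X.
Proof.
move=> u; rewrite /phi !det_mulmx det_inv mulrCA mulVf ?mulr1 //.
by rewrite -unitfE -unitmxE.
Qed.

End Aux.

Theorem mainTheorem4 (R : realType) (p : nat) (hp : prime p)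
    (L : vset R p) (hL : is_lattice L) :
  (forall M N : 'M[R]_p, SOS L M -> SOS L N ->
     SOC L (M *m N *m invmx M *m invmx N)) /\
  (forall M : 'M[R]_p, SOS L M -> SOC L (mxpow M p)).
Proof.
case: hL => B [uB hB].
have eL : eqv L (lattice_span B) by [].
have eI X : eqv (image_v X L) (lattice_span (X *m B)).
  exact: eqv_trans (image_eqv X eL) (image_span X B).
have key1 X : commensurate L (image_v X L) -> isQ (phi B X).
  move=> h; apply: comm_to_Q uB _.
  exact: comm_eqv eL (eI X) h.
have key2 X : X \in unitmx -> isQ (phi B X) -> commensurate L (image_v X L).
  move=> uX hQ; have := Q_to_comm uB _ hQ.
  rewrite unitmx_mul uX uB => /(_ isT).
  exact: comm_eqv (eqv_sym eL) (eqv_sym (eI X)).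
split.
- move=> M N [sM [a a0 hM]] [sN [b b0 hN]].
  have uM := SO_unit sM; have uN := SO_unit sN.
  have uaM : a *: M \in unitmx by rewrite unitmxZ ?unitfE ?gt_eqF.
  have ubN : b *: N \in unitmx by rewrite unitmxZ ?unitfE ?gt_eqF.
  split.
    rewrite !SO_inv //; apply: SO_mul; [apply: SO_mul; [exact: SO_mul|]|];
      exact: SO_tr.
  apply: key2.
    by rewrite !unitmx_mul uM uN !unitmx_inv uM uN.
  have -> : M *m N *m invmx M *m invmx N =
      (a *: M) *m (b *: N) *m invmx (a *: M) *m invmx (b *: N).
    rewrite !invmxZ //.
    do ![rewrite -scalemxAl | rewrite -scalemxAr | rewrite scalerA].
    have -> : a * (b^-1 / a * b) = 1.
      by field; rewrite !gt_eqF.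
    by rewrite scale1r.
  rewrite !(phiM _ _ uB) !(phiV uB) //.
  by apply: isQ_mul; [apply: isQ_mul; [apply: isQ_mul|]|]; try apply: isQ_inv;
    [exact: key1 hM | exact: key1 hN | exact: key1 hM | exact: key1 hN].
- move=> M [sM [a a0 hM]]; split; first exact: SO_pow.
  apply: key2; first exact: SO_unit (SO_pow _ sM).
  have [Qr eQ] := key1 _ hM.
  have ephi : phi B M = a^-1 *: map_mx (@ratr R) Qr.
    by rewrite -eQ phiZ scalerA mulVf ?scale1r // gt_eqF.
  have ed : a^-1 ^+ p = ratr (\det Qr)^-1.
    by rewrite fmorphV -det_map_mx -eQ phiZ detZ det_phi // sM.2 mulr1 exprVn.
  rewrite phi_pow // ephi pow_scale pow_map ed -map_mxZ.
  by eexists.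
Qed.
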